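(* Let $a,b\in\mathbb{R}$ and let $n$ be a non-negative integer. Let $L^{a,b}_n=(d^{(n)}_{i,j})_{i,j\in\mathbb{N}}$ be the infinite lower triangular matrix with $d^{(n)}_{i,j}=a+jb$ if $i-j=n$ and $d^{(n)}_{i,j}=0$ otherwise. Then $L^{a,b}_n=L(ax^n,bx^n)$ belongs to the Lie algebra $\mathcal{L}(\mathcal{R}(\mathbb{R}))$ of the Riordan group, and for every $t\in\mathbb{R}$ the matrix $e^{tL^{a,b}_n}$ is the Riordan matrix $$e^{tL^{a,b}_n}=\begin{cases} T\!\left((1-bntx^n)^{\frac{b-a}{nb}}\ \middle|\ (1-bntx^n)^{\frac1n}\right) & \text{if } b\neq 0 \text{ (and } n\ge 1),\\[4pt] T\!\left(e^{atx^n}\ \middle|\ 1\right) & \text{if } b=0.\end{cases}$$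
   Context: All formal power series are in $\mathbb{R}[[x]]$. For $f,g\in\mathbb{R}[[x]]$ with $f(0)\neq0$, $g(0)\neq 0$, the Riordan matrix $T(f\mid g)=(d_{i,j})_{i,j\ge0}$ is the infinite lower triangular matrix with $d_{i,j}=[x^i]\dfrac{x^jf(x)}{g(x)^{j+1}}$ (the generating function of column $j$ is $x^jf/g^{j+1}$). The Riordan group $\mathcal{R}(\mathbb{R})$ is the set of all such matrices under matrix multiplication. For $\chi(x)=\sum\chi_kx^k$, $\alpha(x)=\sum\alpha_kx^k\in\mathbb{R}[[x]]$, $L(\chi,\alpha)$ denotes the infinite lower triangular matrix with entries $\ell_{i,j}=\chi_{i-j}+j\,\alpha_{i-j}$ for $i\ge j$ and $0$ for $i<j$; the Lie algebra of the Riordan group is $\mathcal{L}(\mathcal{R}(\mathbb{R}))=\{L(\chi,\alpha):\chi,\alpha\in\mathbb{R}[[x]]\}$. For an infinite lower triangular matrix $L$, $e^{tL}$ is the infinite lower triangular matrix whose leading $(m+1)\times(m+1)$ block equals the usual matrix exponential of the leading $(m+1)\times(m+1)$ block of $tL$, for every $m$. For $c\in\mathbb{R}$ and a real constant $s$, $(1-sx^n)^c$ denotes the formal power series $\sum_{k\ge0}\binom{c}{k}(-s)^kx^{nk}$ with generalized binomial coefficients. *)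

(* Defs.v *)
From HB Require Import structures.
From mathcomp Require Import all_boot all_order all_algebra.
From mathcomp Require Import all_classical all_reals all_analysis.
Set Implicit Arguments. Unset Strict Implicit. Unset Printing Implicit Defensive.
Import Order.TTheory GRing.Theory Num.Theory.
Local Open Scope ring_scope.

Section Defs.
Variable R : realType.

(* Formal power series in R[[x]] as coefficient sequences: f k = [x^k] f. *)
Definition fps := nat -> R.

Definition fps_one : fps := fun k => (k == 0%N)%:R.
Definition fps_mul (f g : fps) : fps :=
  fun k => \sum_(i < k.+1) f i * g (k - i)%N.
Definition fps_pow (f : fps) (m : nat) : fps := iter m (fps_mul f) fps_one.
Definition fps_Xpow (j : nat) : fps := fun k => (k == j)%:R.
Definition fps_monom (c : R) (n : nat) : fps := fun k => if k == n then c else 0.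

(* First k+1 coefficients of the multiplicative inverse of g (g 0 <> 0):
   h_0 = 1/g_0,  h_k = -(1/g_0) * sum_{i=1}^k g_i h_{k-i}. *)
Fixpoint fps_inv_upto (g : fps) (k : nat) : seq R :=
  match k with
  | 0 => [:: (g 0%N)^-1]
  | k'.+1 => let s := fps_inv_upto g k' in
      rcons s (- (g 0%N)^-1 * \sum_(i < k'.+1) g i.+1 * nth 0 s (k' - i)%N)
  end.
Definition fps_inv (g : fps) : fps := fun k => nth 0 (fps_inv_upto g k) k.

(* Riordan matrix T(f|g): d_{i,j} = [x^i] x^j f / g^{j+1}. *)
Definition riordan (f g : fps) (i j : nat) : R :=
  fps_mul (fps_mul (fps_Xpow j) f) (fps_inv (fps_pow g j.+1)) i.

Definition gbinom (c : R) (k : nat) : R :=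
  (\prod_(i < k) (c - i%:R)) / (k`!)%:R.

(* (1 - s x^n)^c := sum_k binom(c,k) (-s)^k x^{nk} *)
Definition fps_binom_pow (s : R) (n : nat) (c : R) : fps :=
  fun k => if n == 0%N then \sum_(l < k.+1) gbinom c l * (- s) ^+ l
           else if (n %| k)%N then gbinom c (k %/ n) * (- s) ^+ (k %/ n) else 0.
(* NB: the case n = 0 is never used in the statement. *)

(* e^{c x^n} := sum_k c^k/k! x^{nk}; for n = 0 this is the constant e^c. *)
Definition fps_expXn (c : R) (n : nat) : fps :=
  fun k => if n == 0%N then (if k == 0%N then expR c else 0)
           else if (n %| k)%N then c ^+ (k %/ n) / ((k %/ n)`!)%:R else 0.

Definition Lmat (chi alpha : fps) (i j : nat) : R :=
  if (j <= i)%N then chi (i - j)%N + j%:R * alpha (i - j)%N else 0.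

Definition Labn (a b : R) (n : nat) (i j : nat) : R :=
  if i == (j + n)%N then a + j%:R * b else 0.

Definition block (m : nat) (M : nat -> nat -> R) : 'M[R]_(m.+1) :=
  \matrix_(i < m.+1, j < m.+1) M i j.

Definition expmx (m : nat) (A : 'M[R]_(m.+1)) : 'M[R]_(m.+1) :=
  \matrix_(i, j) limn (fun N : nat => \sum_(k < N) (A ^+ k) i j / (k`!)%:R).

End Defs.

(* Main.v *)
Require Import Defs.
From HB Require Import structures.
From mathcomp Require Import all_boot all_order all_algebra.
From mathcomp Require Import all_classical all_reals all_analysis.
From mathcomp Require Import ring lra zify.
Import Order.TTheory GRing.Theory Num.Theory.
Local Open Scope ring_scope.

Lemma sum1 (R : realType) (m p : nat) (F : nat -> R) :
  (forall i : nat, i != p -> (i < m)%N -> F i = 0) ->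
  \sum_(i < m) F i = if (p < m)%N then F p else 0.
Proof.
move=> H; case: ifP => pm.
  rewrite (bigD1 (Ordinal pm)) //= big1 ?addr0 // => i /= ip.
  apply: H (ltn_ord i); apply: contra ip => /eqP ip; apply/eqP/val_inj.
  by rewrite /= ip.
rewrite big1 // => i _; apply: H (ltn_ord i).
apply/negP => /eqP ip; by rewrite -ip ltn_ord in pm.
Qed.

Lemma fps_mul_one (R : realType) (f : fps R) : fps_mul f (@fps_one R) = f.
Proof.
apply/funext => k; rewrite /fps_mul (sum1 _ _ k (fun i => f i * @fps_one R (k - i)%N)).
  by rewrite ltnSn /fps_one subnn eqxx mulr1.
move=> i ik ilt; rewrite /fps_one.
have -> : (k - i == 0)%N = false by apply/negbTE; rewrite subn_eq0 -ltnNge ltn_neqAle ik /= -ltnS ilt.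
by rewrite mulr0.
Qed.

Lemma size_inv_upto (R : realType) (g : fps R) k : size (fps_inv_upto g k) = k.+1.
Proof. by elim: k => [|k IH] //=; rewrite size_rcons IH. Qed.

Lemma inv_upto_prefix (R : realType) (g : fps R) k i :
  (i <= k)%N -> nth 0 (fps_inv_upto g k) i = fps_inv g i.
Proof.
elim: k i => [|k IH] i.
  by rewrite leqn0 => /eqP ->.
rewrite leq_eqVlt => /orP [/eqP -> // | ik].
rewrite /= nth_rcons size_inv_upto ik; apply: IH; by rewrite -ltnS.
Qed.

Lemma fps_invS (R : realType) (g : fps R) k :
  fps_inv g k.+1 = - (g 0%N)^-1 * \sum_(i < k.+1) g i.+1 * fps_inv g (k - i)%N.
Proof.
rewrite {1}/fps_inv /= nth_rcons size_inv_upto ltnn eqxx; congr (_ * _).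
apply: eq_bigr => i _; rewrite inv_upto_prefix //; exact: leq_subr.
Qed.

Lemma fps_inv_char (R : realType) (g h : fps R) :
  g 0%N != 0 -> fps_mul g h = @fps_one R -> fps_inv g = h.
Proof.
move=> g0 gh; apply/funext => k.
suff: forall i, (i <= k)%N -> fps_inv g i = h i by apply.
elim: k => [|k IH] i.
  rewrite leqn0 => /eqP ->; have := congr1 (fun f => f 0%N) gh.
  rewrite /fps_mul /fps_one big_ord1 /= => e.
  rewrite /fps_inv /=; apply: (mulfI g0); rewrite divff // e; done.
rewrite leq_eqVlt => /orP [/eqP -> | ik]; last by apply: IH; rewrite -ltnS.
have := congr1 (fun f => f k.+1) gh.
rewrite /fps_mul /fps_one big_ord_recl /= subn0 => e.
rewrite fps_invS.
have -> : \sum_(i < k.+1) g i.+1 * fps_inv g (k - i)%N = \sum_(i < k.+1) g (bump 0 i) * h (k.+1 - bump 0 i)%N.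
  apply: eq_bigr => i0 _; rewrite /bump /= add1n subSS IH //; exact: leq_subr.
have -> : \sum_(i < k.+1) g (bump 0 i) * h (k.+1 - bump 0 i)%N = - (g 0%N * h k.+1).
  by apply/eqP; rewrite -addr_eq0 addrC e.
by rewrite mulrN mulNr opprK mulrA mulVf // mul1r.
Qed.

Lemma fps_mulX (R : realType) (f : fps R) j k :
  fps_mul (@fps_Xpow R j) f k = if (j <= k)%N then f (k - j)%N else 0.
Proof.
rewrite /fps_mul (sum1 _ _ j (fun i => @fps_Xpow R j i * f (k - i)%N)).
  by rewrite ltnS /fps_Xpow eqxx mul1r.
by move=> i ij _; rewrite /fps_Xpow (negbTE ij) mul0r.
Qed.

Lemma fps_mulX2 (R : realType) (f h : fps R) j i :
  fps_mul (fps_mul (@fps_Xpow R j) f) h i = if (j <= i)%N then fps_mul f h (i - j)%N else 0.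
Proof.
rewrite /fps_mul; under eq_bigr do rewrite -/(fps_mul _ _ _) fps_mulX.
case: ifP => ji; last first.
  rewrite big1 // => k _; have kj : (j <= k)%N = false.
    apply/negbTE; rewrite -ltnNge; apply: (leq_trans (ltn_ord k)); by rewrite ltnNge ji.
  by rewrite kj mul0r.
rewrite -(big_mkord xpredT (fun k => (if (j <= k)%N then f (k - j)%N else 0) * h (i - k)%N)).
rewrite (big_cat_nat (leq0n j) (leq_trans ji (leqnSn i))) /=.
rewrite big_nat_cond big1 ?add0r; last first.
  by move=> k /andP [/andP [_ kj] _]; rewrite leqNgt kj mul0r.
rewrite -{1}(add0n j) big_addn big_mkord subSn //.
apply: eq_bigr => k _; rewrite leq_addl addnK; congr (_ * h _); lia.
Qed.

Lemma riordanE (R : realType) (f g : fps R) i j :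
  riordan f g i j = if (j <= i)%N then fps_mul f (fps_inv (fps_pow g j.+1)) (i - j)%N else 0.
Proof. exact: fps_mulX2. Qed.

Definition spread {R : realType} (n : nat) (u : nat -> R) : fps R :=
  fun k => if (n %| k)%N then u (k %/ n)%N else 0.
Definition conv {R : realType} (u v : nat -> R) (K : nat) : R :=
  \sum_(l < K.+1) u l * v (K - l)%N.

Lemma notdvd_between (n M i : nat) : (0 < n)%N -> (M * n < i)%N -> (i < M * n + n)%N -> ~~ (n %| i)%N.
Proof.
move=> n0 h1 h2; apply/negP => /dvdnP [q iq]; subst i.
have : (M < q)%N by rewrite -(ltn_pmul2r n0).
have : (q < M.+1)%N by rewrite -(ltn_pmul2r n0) mulSnr.
lia.
Qed.

Lemma sum_spread (R : realType) (n M : nat) (F : nat -> R) : (0 < n)%N ->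
  \sum_(i < M * n + 1) (if (n %| i)%N then F (i %/ n)%N else 0) = \sum_(l < M.+1) F l.
Proof.
move=> n0; elim: M => [|M IH].
  by rewrite mul0n big_ord1 big_ord1 dvdn0 div0n.
rewrite big_ord_recr /= -IH.
rewrite -!(big_mkord xpredT (fun i => if (n %| i)%N then F (i %/ n)%N else 0)).
have e : (M.+1 * n + 1 = (M * n + 1) + n)%N by rewrite mulSnr; lia.
rewrite e (big_cat_nat (n := (M * n + 1)%N)) //=; last by lia.
have e2 : ((M * n + 1) + n = (M * n + n).+1)%N by lia.
rewrite e2 big_nat_recr /=; last by lia.
congr (_ + _); rewrite big_nat_cond big1 ?add0r; last first.
  move=> i /andP [/andP [h1 h2] _].
  have h1' : (M * n < i)%N by lia.
  by rewrite (negbTE (@notdvd_between n M i n0 h1' h2)).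
rewrite -mulSnr dvdn_mull // mulnK //.
Qed.

Lemma spread_mul (R : realType) (n : nat) (u v : nat -> R) : (0 < n)%N ->
  fps_mul (spread n u) (spread n v) = spread n (conv u v).
Proof.
move=> n0; apply/funext => k; rewrite /fps_mul {3}/spread.
case: ifP => nk; last first.
  rewrite big1 // => i _; rewrite /spread.
  case: ifP => ni; last by rewrite mul0r.
  case: ifP => nki; last by rewrite mulr0.
  have : (n %| i + (k - i))%N by rewrite dvdn_addr.
  by rewrite subnKC ?nk // -ltnS ltn_ord.
have kK : k = ((k %/ n) * n)%N by rewrite divnK.
set K := (k %/ n)%N in kK *.
rewrite /conv -(@sum_spread R n K (fun l => u l * v (K - l)%N) n0) kK addn1.
apply: eq_bigr => i _; rewrite /spread.
case: ifP => ni; last by rewrite mul0r.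
have iq : (i : nat) = ((i %/ n) * n)%N by rewrite divnK.
have qK : (i %/ n <= K)%N.
  have := ltn_ord i; rewrite ltnS {1}iq leq_pmul2r //.
have -> : (K * n - i = (K - i %/ n) * n)%N by rewrite mulnBl -iq.
by rewrite dvdn_mull // mulnK.
Qed.

Lemma gb0 (R : realType) (c : R) : gbinom c 0 = 1.
Proof. by rewrite /gbinom big_ord0 fact0 divr1. Qed.

Lemma gbS (R : realType) (c : R) k : (k.+1)%:R * gbinom c k.+1 = (c - k%:R) * gbinom c k.
Proof.
rewrite /gbinom big_ord_recr /= factS natrM.
have h1 : (k.+1)%:R != 0 :> R by rewrite pnatr_eq0.
have h2 : (k`!)%:R != 0 :> R by rewrite pnatr_eq0 -lt0n fact_gt0.
field; rewrite h2 /=; by rewrite -natr1 addrC in h1.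
Qed.

Lemma gb0l (R : realType) k : gbinom (0 : R) k.+1 = 0.
Proof. by rewrite /gbinom big_ord_recl /= subr0 mul0r mul0r. Qed.

Lemma vandermonde (R : realType) (c d : R) K :
  \sum_(l < K.+1) gbinom c l * gbinom d (K - l)%N = gbinom (c + d) K.
Proof.
elim: K => [|K IH]; first by rewrite big_ord1 !gb0 mulr1.
have hK : (K.+1)%:R != 0 :> R by rewrite pnatr_eq0.
apply: (mulfI hK); rewrite gbS -IH mulr_sumr.
have split1 : forall l : 'I_K.+2, (K.+1)%:R * (gbinom c l * gbinom d (K.+1 - l)%N) =
   (l%:R * gbinom c l) * gbinom d (K.+1 - l)%N + gbinom c l * ((K.+1 - l)%N%:R * gbinom d (K.+1 - l)%N).
  move=> l; have lK : (l <= K.+1)%N by rewrite -ltnS ltn_ord.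
  rewrite -{1}(subnKC lK) natrD; ring.
rewrite (eq_bigr _ (fun l _ => split1 l)) big_split /=.
rewrite big_ord_recl /= mul0r mul0r add0r.
rewrite [X in _ + X]big_ord_recr /= subnn mul0r mulr0 addr0.
rewrite mulr_sumr -big_split /=; apply: eq_bigr => l _.
have lK : (l <= K)%N by rewrite -ltnS ltn_ord.
rewrite /bump /= add1n gbS subSS subSn // gbS natrB //.
ring.
Qed.

Lemma binom_spread (R : realType) (s c : R) n : (0 < n)%N ->
  fps_binom_pow s n c = spread n (fun l => gbinom c l * (- s) ^+ l).
Proof. move=> n0; apply/funext => k; rewrite /fps_binom_pow /spread; have /negbTE -> : n != 0%N by rewrite -lt0n. by []. Qed.

Lemma binom_mul (R : realType) (s c d : R) n : (0 < n)%N ->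
  fps_mul (fps_binom_pow s n c) (fps_binom_pow s n d) = fps_binom_pow s n (c + d).
Proof.
move=> n0; rewrite !binom_spread // spread_mul //; congr spread.
apply/funext => K; rewrite /conv -vandermonde mulr_suml; apply: eq_bigr => l _.
have lK : (l <= K)%N by rewrite -ltnS ltn_ord.
have -> : (- s) ^+ K = (- s) ^+ l * (- s) ^+ (K - l) by rewrite -exprD subnKC.
ring.
Qed.

Lemma binom_zero (R : realType) (s : R) n : (0 < n)%N -> fps_binom_pow s n 0 = @fps_one R.
Proof.
move=> n0; apply/funext => k; rewrite binom_spread // /spread /fps_one.
case: ifP => nk.
  case: k nk => [|k] nk; first by rewrite div0n gb0 expr0 mulr1.
  have : (0 < k.+1 %/ n)%N by rewrite divn_gt0 // dvdn_leq.
  by case: (k.+1 %/ n)%N => // q _; rewrite gb0l mul0r.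
case: k nk => [|k] nk //; by rewrite dvdn0 in nk.
Qed.

Lemma binom_pow (R : realType) (s c : R) n m : (0 < n)%N ->
  fps_pow (fps_binom_pow s n c) m = fps_binom_pow s n (m%:R * c).
Proof.
move=> n0; elim: m => [|m IH]; first by rewrite mul0r binom_zero.
rewrite /fps_pow iterS -/(fps_pow _ m) IH binom_mul // mulrSr; congr fps_binom_pow; ring.
Qed.

Lemma binom_inv (R : realType) (s c : R) n : (0 < n)%N ->
  fps_inv (fps_binom_pow s n c) = fps_binom_pow s n (- c).
Proof.
move=> n0; apply: fps_inv_char.
  by rewrite binom_spread // /spread dvdn0 div0n gb0 expr0 mulr1 oner_eq0.
by rewrite binom_mul // subrr binom_zero.
Qed.

Definition Pp {R : realType} (a b : R) (n j k : nat) : R :=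
  \prod_(l < k) (a + (j + n * l)%N%:R * b).

Lemma powA (R : realType) (a b : R) n m k (i j : 'I_m.+1) :
  ((block m (Labn a b n)) ^+ k) i j =
  if (i : nat) == (j + n * k)%N then Pp a b n j k else 0.
Proof.
elim: k i => [|k IH] i.
  rewrite expr0 mxE muln0 addn0 /Pp big_ord0.
  by case: (i =P j) => [->|ij]; [rewrite eqxx | case: eqP => // /val_inj].
rewrite exprS -mulmxE mxE.
rewrite (eq_bigr (fun l : 'I_m.+1 => Labn a b n i l * (if (l:nat) == (j + n*k)%N then Pp a b n j k else 0))); last first.
  by move=> l _; rewrite IH mxE.
rewrite (sum1 _ _ (j + n * k)%N (fun l => Labn a b n i l * (if (l:nat) == (j + n*k)%N then Pp a b n j k else 0))); last first.
  by move=> l /negbTE -> _; rewrite mulr0.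
rewrite eqxx /= /Labn.
have -> : (j + n * k.+1 = j + n * k + n)%N by rewrite mulnS; lia.
case: ifP => h; last first.
  case: ifP => // /eqP e; move: h; have := ltn_ord i; rewrite e; lia.
case: ifP => _; last by rewrite mul0r.
by rewrite /Pp big_ord_recr /= mulrC.
Qed.

Lemma expmx_entry (R : realType) (t : R) m (M : nat -> nat -> R) (i j : 'I_m.+1) :
  expmx (t *: block m M) i j =
  limn (fun N : nat => \sum_(k < N) t ^+ k * ((block m M) ^+ k) i j / (k`!)%:R).
Proof.
rewrite mxE.
suff -> : (fun N : nat => \sum_(k < N) ((t *: block m M) ^+ k) i j / (k`!)%:R) =
  (fun N : nat => \sum_(k < N) t ^+ k * ((block m M) ^+ k) i j / (k`!)%:R) by [].
apply/funext => N; apply: eq_bigr => k _.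
by rewrite exprZn mxE.
Qed.

Lemma lim_evconst (R : realType) (F : nat -> R) (C : R) N0 :
  (forall N, (N0 <= N)%N -> \sum_(k < N) F k = C) -> limn (fun N => \sum_(k < N) F k) = C.
Proof.
move=> H; apply: lim_near_cst => //.
by exists N0 => // N /= hN; apply: H.
Qed.

Lemma expmx_pos (R : realType) (a b t : R) n m (i j : 'I_m.+1) : (0 < n)%N ->
  expmx (t *: block m (Labn a b n)) i j =
  if (j <= i)%N && (n %| (i - j))%N then
    t ^+ ((i - j) %/ n) * Pp a b n j ((i - j) %/ n) / (((i - j) %/ n)`!)%:R else 0.
Proof.
move=> n0; rewrite expmx_entry.
set K := ((i - j) %/ n)%N.
set C := (if _ then _ else _).
suff Hs : forall N, (m.+1 <= N)%N -> \sum_(k < N) t ^+ k * ((block m (Labn a b n)) ^+ k) i j / (k`!)%:R = C.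
  exact (@lim_evconst R (fun k => t ^+ k * ((block m (Labn a b n)) ^+ k) i j / (k`!)%:R) C m.+1 Hs).
move=> N hN; rewrite /C.
have hi := ltn_ord i.
have KN : (K < N)%N.
  apply: leq_trans hN; rewrite ltnS; apply: leq_trans (leq_div _ _) _; lia.
rewrite (sum1 _ _ K (fun k => t ^+ k * ((block m (Labn a b n)) ^+ k) i j / (k`!)%:R)); last first.
  move=> k kK _; rewrite powA; case: eqP => [e|]; last by rewrite mulr0 mul0r.
  exfalso; move/negP: kK; apply; apply/eqP.
  by rewrite /K e addKn mulKn.
rewrite KN powA.
case: ifP => h.
  move/eqP: h => e; rewrite {1 2}e leq_addr addKn dvdn_mulr //.
case: ifP => //; last by rewrite mulr0 mul0r.
move/andP => [ji nd].
move/negP: h; case; apply/eqP; rewrite /K mulnC divnK // subnKC //.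
Qed.

Lemma expmx_n0 (R : realType) (a t : R) m (i j : 'I_m.+1) :
  expmx (t *: block m (Labn a 0 0)) i j = if (i : nat) == j then expR (a * t) else 0.
Proof.
rewrite expmx_entry.
have PE : forall k, Pp a 0 0 j k = a ^+ k.
  by move=> k; rewrite /Pp (eq_bigr (fun _ => a)) ?prodr_const ?card_ord // => l _; rewrite mulr0 addr0.
case: eqP => e; last first.
  have Hs : forall N, (0 <= N)%N -> \sum_(k < N) t ^+ k * ((block m (Labn a 0 0)) ^+ k) i j / (k`!)%:R = 0.
    move=> N _; apply: big1 => k _; rewrite powA mul0n addn0.
    by case: eqP => // ?; rewrite mulr0 mul0r.
  exact (@lim_evconst R (fun k => t ^+ k * ((block m (Labn a 0 0)) ^+ k) i j / (k`!)%:R) 0 0 Hs).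
have E : forall N, \sum_(k < N) t ^+ k * ((block m (Labn a 0 0)) ^+ k) i j / (k`!)%:R = series (exp_coeff (a * t)) N.
  move=> N; rewrite /series /exp_coeff /= big_mkord; apply: eq_bigr => k _.
  by rewrite powA mul0n addn0 e eqxx PE exprMn (mulrC (a ^+ k)).
rewrite /expR. f_equal. f_equal. exact (boolp.funext E).
Qed.

Lemma fps_pow_one (R : realType) m : fps_pow (@fps_one R) m = @fps_one R.
Proof.
elim: m => [|m IH] //; by rewrite /fps_pow iterS -/(fps_pow _ m) IH fps_mul_one.
Qed.

Lemma fps_inv_one (R : realType) : fps_inv (@fps_one R) = @fps_one R.
Proof. apply: fps_inv_char; first by rewrite /fps_one eqxx oner_eq0. exact: fps_mul_one. Qed.

Lemma prod_scale (R : realType) (c : R) (F : nat -> R) K :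
  \prod_(l < K) (c * F l) = c ^+ K * \prod_(l < K) F l.
Proof. by rewrite big_split /= prodr_const card_ord. Qed.

Theorem mainTheorem1 (R : realType) (a b : R) (n : nat) :
  (forall i j : nat, Labn a b n i j = Lmat (fps_monom a n) (fps_monom b n) i j) /\
  (b != 0 -> (0 < n)%N ->
     forall (t : R) (m : nat) (i j : 'I_m.+1),
       expmx (t *: block m (Labn a b n)) i j =
       riordan (fps_binom_pow (b * n%:R * t) n ((b - a) / (n%:R * b)))
               (fps_binom_pow (b * n%:R * t) n (1 / n%:R)) i j) /\
  (b = 0 ->
     forall (t : R) (m : nat) (i j : 'I_m.+1),
       expmx (t *: block m (Labn a b n)) i j =
       riordan (fps_expXn (a * t) n) (@fps_one R) i j).
Proof.
split.
  move=> i j; rewrite /Labn /Lmat /fps_monom; case: leqP => ji.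
    have -> : (i - j == n)%N = (i == j + n)%N by apply/eqP/eqP; lia.
    by case: ifP => _ //; rewrite mulr0 addr0.
  have -> : (i == j + n)%N = false by apply/negbTE/eqP; lia.
  by [].
split.
  move=> bn0 n0 t m i j.
  rewrite expmx_pos // riordanE binom_pow // binom_inv // binom_mul // binom_spread // /spread.
  case: (leqP j i) => ji /=; last by [].
  case: ifP => nd //.
  rewrite /gbinom /Pp.
  set c' := ((b - a) / (n%:R * b) - j.+1%:R * (1 / n%:R)).
  rewrite (_ : t ^+ _ * _ = (- (b * n%:R * t)) ^+ ((i - j) %/ n) * \prod_(l < (i - j) %/ n) (c' - l%:R)); first by ring.
  rewrite -(prod_scale _ t (fun l => a + (j + n * l)%N%:R * b)) -(prod_scale _ _ (fun l : nat => c' - l%:R)).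
  apply: eq_bigr => l _.
  have nn0 : n%:R != 0 :> R by rewrite pnatr_eq0 -lt0n.
  rewrite /c' -natr1 !natrD natrM; field.
  by rewrite nn0 bn0.
move=> b0 t m i j; subst b.
case: (posnP n) => [n0 | n0].
  subst n; rewrite expmx_n0 riordanE fps_pow_one fps_inv_one fps_mul_one /fps_expXn /=.
  case: leqP => ji.
    have -> : (i - j == 0)%N = ((i : nat) == j) by apply/eqP/eqP; lia.
    by [].
  have -> : ((i : nat) == j) = false by apply/negbTE/eqP; lia.
  by [].
rewrite expmx_pos // riordanE fps_pow_one fps_inv_one fps_mul_one /fps_expXn.
have /negbTE -> : n != 0%N by rewrite -lt0n.
case: (leqP j i) => ji /=; last by [].
case: ifP => nd //.
rewrite /Pp (eq_bigr (fun _ => a)) ?prodr_const ?card_ord; last by move=> l _; rewrite mulr0 addr0.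
by rewrite exprMn (mulrC (a ^+ _)).
Qed.
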